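(* Let $G$ be a $1$-DCFG in Chomsky normal form, let $T$ be a derivation tree of a word $w\in L(G)$, and let $\pi=(i_1,j_1,k_1,l_1,i_2,j_2,k_2,l_2)$ and $\pi'=(i'_1,j'_1,k'_1,l'_1,i'_2,j'_2,k'_2,l'_2)$ be two $2$-pumps in $T$. Then, after possibly interchanging $\pi$ and $\pi'$, one of the following holds: 1. $l_2\le i'_1$; 2. $i_1\le i'_1\le l'_2\le j_1$ or $k_2\le i'_1\le l'_2\le l_2$; 3. $i_1\le i'_1\le j'_1\le j_1\le k_1\le k'_1\le l'_1\le l_1\le i_2\le i'_2\le j'_2\le j_2\le k_2\le k'_2\le l'_2\le l_2$; 4. $i_1\le i'_1\le j'_1\le k'_1\le j_1\le k_1\le l'_1\le l_1\le i_2\le i'_2\le j_2\le k_2\le j'_2\le k'_2\le l'_2\le l_2$; 5. $i_1\le i'_1\le j_1\le k_1\le j'_1\le k'_1\le l'_1\le l_1\le i_2\le i'_2\le j'_2\le k'_2\le j_2\le k_2\le l'_2\le l_2$; 6. $i_1\le i'_1\le j_1\le j'_1\le k'_1\le k_1\le l'_1\le l_1\le i_2\le i'_2\le j_2\le j'_2\le k'_2\le k_2\le l'_2\le l_2$; 7. $k_1\le i'_1\le l'_1\le l_1\le i_2\le i'_2\le l'_2\le j_2$; 8. $i_1\le i'_1\le l'_1\le j_1\le k_2\le i'_2\le l'_2\le l_2$; 9. $k_1\le i'_1\le l'_2\le l_1$ or $i_2\le i'_1\le l'_2\le j_2$; 10. $j_1\le i'_1\le l'_1\le k_1\le j_2\le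 i'_2\le l'_2\le k_2$; 11. $j_1\le i'_1\le l'_2\le k_1$ or $j_2\le i'_1\le l'_2\le k_2$; 12. $l_1\le i'_1\le l'_2\le i_2$.
   Context: Let $\Sigma$ be a finite alphabet and $1\notin\Sigma$ a separator; $\Sigma_1=\Sigma\cup\{1\}$, $\mathrm{rk}(w)=|w|_1$; for $\mathrm{rk}(u)\ge1$, $u\odot_1 v$ replaces the first occurrence of $1$ in $u$ by $v$. A $1$-DCFG in Chomsky normal form is $G=\langle N,\Sigma,P,S\rangle$ with nonterminals of rank $0$ or $1$, $\mathrm{rk}(S)=0$, and rules of the forms $A\to B\cdot C$ (with $\mathrm{rk}A=\mathrm{rk}B+\mathrm{rk}C\le1$), $A\to B\odot_1 C$ (with $\mathrm{rk}B=1$, $\mathrm{rk}A=\mathrm{rk}C$), where $B,C\in N\setminus\{S\}$, $A\to a$ with $a\in\Sigma_1$ ($\mathrm{rk}A=\mathrm{rk}a$), or $S\to\epsilon$. A derivation tree is a finite rooted ordered tree with nonterminal-labeled nodes, each internal node labeled $A$ having two children $B,C$ and annotated by a rule $A\to B\cdot C$ or $A\to B\odot_1 C$, each leaf labeled $A$ annotated by a rule $A\to a$ or $S\to\epsilon$. The yield of a node is the word of $\Sigma_1^*$ computed bottom-up ($a$ at a leaf with rule $A\to a$, $\epsilon$ for $S\to\epsilon$, concatenation resp. $\odot_1$ of the children's yields at internal nodes); $T$ is a derivation tree of $w$ if its root is labeled $S$ with yield $w$; $L(G)$ is the set of such $w$. The rank of a node is the rank of its label. Let $w=a_1\cdots a_n$;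 each letter of $\Sigma$ occurring in a yield comes from a leaf and thus corresponds to a position of $w$. For a node of rank $1$ its yield has the form $w_11w_2$ where $w_1=a_{i_1}\cdots a_{j_1-1}$ and $w_2=a_{i_2}\cdots a_{j_2-1}$ are contiguous segments of $w$ (as occurrences) with $i_1\le j_1\le i_2\le j_2$; the tuple $(i_1,j_1,i_2,j_2)$ is the constituent of the node. A node $v'$ is a direct descendant of $v$ if $v'$ is a proper descendant of $v$ and all nodes on the path between them (inclusive) have the same rank. A $2$-pump is a pair $(v,v')$ of internal nodes with the same label of rank $1$ such that $v'$ is a direct descendant of $v$; if the constituent of $v$ is $(i_1,l_1,i_2,l_2)$ and that of $v'$ is $(j_1,k_1,j_2,k_2)$, then $i_1\le j_1\le k_1\le l_1\le i_2\le j_2\le k_2\le l_2$ and the pump is identified with the tuple $(i_1,j_1,k_1,l_1,i_2,j_2,k_2,l_2)$. *)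

(* Defs.v *)
From mathcomp Require Import all_boot.
Set Implicit Arguments. Unset Strict Implicit. Unset Printing Implicit Defensive.

(** Letters of Sigma_1 = Sigma + {1}: [Some a] is the letter a, [None] is the
    separator 1. *)
Definition sym (Sigma : Type) := option Sigma.

Definition rkw (Sigma : eqType) (w : seq (option Sigma)) : nat :=
  count (fun x => x == None) w.

Definition subst1 (Sigma : eqType) (u v : seq (option Sigma)) :=
  let i := index None u in take i u ++ v ++ drop i.+1 u.

Inductive rule (Sigma N : Type) :=
| RCat of N & N & N            (* A -> B . C *)
| RSub of N & N & N            (* A -> B (.)_1 C *)
| RTerm of N & option Sigma    (* A -> a, a in Sigma_1 *)
| REps.                        (* S -> epsilon *)
Arguments REps {Sigma N}.

Record grammar (Sigma : finType) := Grammar {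
  nt : finType;
  rkN : nt -> nat;
  start : nt;
  prods : rule Sigma nt -> Prop }.
Arguments prods {Sigma} g _.
Arguments start {Sigma} g.
Arguments rkN {Sigma g} _.

Definition cnf (Sigma : finType) (G : grammar Sigma) : Prop :=
  (forall A : nt G, rkN A <= 1) /\ rkN (start G) = 0 /\
  forall r, prods G r ->
    match r with
    | RCat A B C => rkN A = rkN B + rkN C /\ B <> start G /\ C <> start G
    | RSub A B C => rkN B = 1 /\ rkN A = rkN C /\ B <> start G /\ C <> start G
    | RTerm A a => rkN A = (if a is None then 1 else 0)
    | REps => True
    end.

Inductive tree (Sigma N : Type) :=
| Leaf of N & rule Sigma N
| Node of N & rule Sigma N & tree Sigma N & tree Sigma N.

Definition label (Sigma N : Type) (t : tree Sigma N) : N :=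
  match t with Leaf A _ => A | Node A _ _ _ => A end.

Definition internal (Sigma N : Type) (t : tree Sigma N) : bool :=
  if t is Node _ _ _ _ then true else false.

Fixpoint valid_tree (Sigma : finType) (G : grammar Sigma) (t : tree Sigma (nt G))
  : Prop :=
  match t with
  | Leaf A r => prods G r /\
      match r with
      | RTerm A' _ => A' = A
      | REps => A = start G
      | _ => False
      end
  | Node A r tl tr => prods G r /\ valid_tree tl /\ valid_tree tr /\
      match r with
      | RCat A' B C => A' = A /\ B = label tl /\ C = label tr
      | RSub A' B C => A' = A /\ B = label tl /\ C = label tr
      | _ => False
      end
  end.

Fixpoint yield (Sigma : eqType) (N : Type) (t : tree Sigma N) : seq (option Sigma) :=
  match t with
  | Leaf _ r => if r is RTerm _ a then [:: a] else [::]
  | Node _ r tl tr =>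
      if r is RSub _ _ _ then subst1 (yield tl) (yield tr)
      else yield tl ++ yield tr
  end.

Definition derivation (Sigma : finType) (G : grammar Sigma)
  (T : tree Sigma (nt G)) (w : seq Sigma) : Prop :=
  valid_tree T /\ label T = start G /\ yield T = map Some w.

(** Nodes are addressed by paths from the root (false = left child,
    true = right child). *)
Fixpoint subtree (Sigma N : Type) (t : tree Sigma N) (p : seq bool)
  : option (tree Sigma N) :=
  match p, t with
  | [::], _ => Some t
  | b :: p', Node _ _ tl tr => subtree (if b then tr else tl) p'
  | _ :: _, Leaf _ _ => None
  end.

(** Positions in w (0-based).  A span (i1, j1, i2, j2) of a rank-1 node
    says that its yield w1 1 w2 has w1 = w[i1, j1) and w2 = w[i2, j2);
    a rank-0 node with yield w[a, b) gets span (a, b, b, b).  Spans are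
    propagated top-down from the root span (0, |w|, |w|, |w|), splitting
    according to the rule and the lengths of the children's yields. *)
Definition span := (nat * nat * nat * nat)%type.

Definition pre (Sigma : eqType) (x : seq (option Sigma)) := index None x.
Definition post (Sigma : eqType) (x : seq (option Sigma)) :=
  size x - (index None x).+1.

Definition child_spans (Sigma : finType) (G : grammar Sigma)
  (r : rule Sigma (nt G)) (tl tr : tree Sigma (nt G)) (s : span) : span * span :=
  let '(a1, b1, a2, b2) := s in
  let yl := yield tl in
  match r with
  | RSub _ _ _ =>
      let m := a1 + pre yl in
      if rkN (label tr) == 1 then
        ((a1, m, b2 - post yl, b2), (m, b1, a2, b2 - post yl))
      else
        let e := b1 - post yl in ((a1, m, e, b1), (m, e, e, e))
  | _ =>
      if rkN (label tl) == 1 then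
        let e := a2 + post yl in ((a1, b1, a2, e), (e, b2, b2, b2))
      else
        let m := a1 + size yl in
        ((a1, m, m, m),
         if rkN (label tr) == 1 then (m, b1, a2, b2) else (m, b1, b1, b1))
  end.

Fixpoint span_at (Sigma : finType) (G : grammar Sigma)
  (t : tree Sigma (nt G)) (s : span) (p : seq bool) : span :=
  match p, t with
  | [::], _ => s
  | b :: p', Node _ r tl tr =>
      let ss := child_spans r tl tr s in
      if b then span_at tr ss.2 p' else span_at tl ss.1 p'
  | _ :: _, Leaf _ _ => s
  end.

Definition constituent (Sigma : finType) (G : grammar Sigma)
  (T : tree Sigma (nt G)) (p : seq bool) : span :=
  let n := size (yield T) in span_at T (0, n, n, n) p.

Definition direct_desc (Sigma : finType) (G : grammar Sigma)
  (T : tree Sigma (nt G)) (v v' : seq bool) : Prop :=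
  exists q tv, q <> [::] /\ v' = v ++ q /\ subtree T v = Some tv /\
    forall k, k <= size q ->
      exists t, subtree T (v ++ take k q) = Some t /\
                rkN (label t) = rkN (label tv).

Definition pump2 (Sigma : finType) (G : grammar Sigma)
  (T : tree Sigma (nt G)) (v v' : seq bool) : Prop :=
  exists tv tv', subtree T v = Some tv /\ subtree T v' = Some tv' /\
    internal tv /\ internal tv' /\ label tv = label tv' /\
    rkN (label tv) = 1 /\ direct_desc T v v'.

Definition cases12 (i1 j1 k1 l1 i2 j2 k2 l2 i1' j1' k1' l1' i2' j2' k2' l2' : nat)
  : Prop :=
     (l2 <= i1')
  \/ (sorted leq [:: i1; i1'; l2'; j1] \/ sorted leq [:: k2; i1'; l2'; l2])
  \/ (sorted leq [:: i1; i1'; j1'; j1; k1; k1'; l1'; l1;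
                     i2; i2'; j2'; j2; k2; k2'; l2'; l2])
  \/ (sorted leq [:: i1; i1'; j1'; k1'; j1; k1; l1'; l1;
                     i2; i2'; j2; k2; j2'; k2'; l2'; l2])
  \/ (sorted leq [:: i1; i1'; j1; k1; j1'; k1'; l1'; l1;
                     i2; i2'; j2'; k2'; j2; k2; l2'; l2])
  \/ (sorted leq [:: i1; i1'; j1; j1'; k1'; k1; l1'; l1;
                     i2; i2'; j2; j2'; k2'; k2; l2'; l2])
  \/ (sorted leq [:: k1; i1'; l1'; l1; i2; i2'; l2'; j2])
  \/ (sorted leq [:: i1; i1'; l1'; j1; k2; i2'; l2'; l2])
  \/ (sorted leq [:: k1; i1'; l2'; l1] \/ sorted leq [:: i2; i1'; l2'; j2])
  \/ (sorted leq [:: j1; i1'; l1'; k1; j2; i2'; l2'; k2])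
  \/ (sorted leq [:: j1; i1'; l2'; k1] \/ sorted leq [:: j2; i1'; l2'; k2])
  \/ (sorted leq [:: l1; i1'; l2'; i2]).

(* Main.v *)
Require Import Defs.
From mathcomp Require Import all_boot zify.
Set Implicit Arguments. Unset Strict Implicit.


Lemma rkw_cat (S : eqType) (x y : seq (option S)) : rkw (x ++ y) = rkw x + rkw y.
Proof. exact: count_cat. Qed.

Lemma pre_dec (S : eqType) (l r : seq (option S)) : rkw l = 0 -> pre (l ++ None :: r) = size l.
Proof.
rewrite /pre /rkw; elim: l => [|a l IH] /=; first by [].
by case: a => // a' /= H; rewrite IH.
Qed.

Lemma post_dec (S : eqType) (l r : seq (option S)) : rkw l = 0 -> post (l ++ None :: r) = size r.
Proof. move=> H; rewrite /post -/(pre _) pre_dec // size_cat /=; lia. Qed.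

Lemma subst1_dec (S : eqType) (l r v : seq (option S)) : rkw l = 0 ->
  subst1 (l ++ None :: r) v = l ++ v ++ r.
Proof.
rewrite /subst1 /rkw; elim: l => [|a l IH] /=; first by rewrite drop0.
by case: a => // a' /= H; rewrite IH.
Qed.

Lemma rk1_dec (S : eqType) (x : seq (option S)) : rkw x = 1 ->
  exists l r, x = l ++ None :: r /\ rkw l = 0 /\ rkw r = 0.
Proof.
rewrite /rkw; elim: x => [|a x IH] //=.
case: a => [a'|] /=.
  move=> /IH [l [r [-> [H1 H2]]]]; exists (Some a' :: l), r; split => //.
move=> [] H; exists [::], x; split => //.
Qed.

Lemma rk_yield (Sigma : finType) (G : grammar Sigma) (t : tree Sigma (nt G)) :
  cnf G -> valid_tree t -> rkw (yield t) = rkN (label t).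
Proof.
move=> [H1 [H2 H3]]; elim: t => [A r|A r tl IHl tr IHr] /=.
  case=> Hp; have := H3 _ Hp; case: r Hp => //=.
  - by move=> A' a _ Ha <-; case: a Ha => [a|] /= ->.
  - by move=> _ _ ->; rewrite H2.
case=> Hp [vl [vr Hr]]; have := H3 _ Hp.
case: r Hp Hr => //= A' B C _ [-> [-> ->]].
  by move=> [-> _]; rewrite rkw_cat IHl // IHr.
move=> [HB [HC _]]; have := IHl vl; rewrite HB => /rk1_dec [l [r [-> [Hl Hr]]]].
by rewrite subst1_dec // !rkw_cat /= Hl Hr IHr // HC addn0.
Qed.

Lemma pre_cat0 (S : eqType) (x y : seq (option S)) : rkw x = 0 -> pre (x ++ y) = size x + pre y.
Proof. rewrite /pre /rkw; elim: x => [|a x IH] //=; by case: a => // a' /= H; rewrite IH. Qed.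

Lemma pre_cat1 (S : eqType) (x y : seq (option S)) : rkw x = 1 -> pre (x ++ y) = pre x.
Proof.
move=> /rk1_dec [l [r [-> [H1 H2]]]]; rewrite -catA cat_cons !pre_dec //.
Qed.

Lemma size_pp (S : eqType) (x : seq (option S)) : rkw x = 1 -> size x = pre x + post x + 1.
Proof.
move=> /rk1_dec [l [r [-> [H1 H2]]]]; rewrite pre_dec // post_dec // size_cat /=; lia.
Qed.

Lemma post_cat0 (S : eqType) (x y : seq (option S)) : rkw x = 1 -> rkw y = 0 ->
  post (x ++ y) = post x + size y.
Proof.
move=> /rk1_dec [l [r [-> [H1 H2]]]] H3; rewrite -catA cat_cons !post_dec // size_cat //.
Qed.

Lemma post_cat1 (S : eqType) (x y : seq (option S)) : rkw x = 0 -> rkw y = 1 ->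
  post (x ++ y) = post y.
Proof.
move=> H /rk1_dec [l [r [-> [H1 H2]]]]; rewrite catA !post_dec // rkw_cat H H1 //.
Qed.

Lemma pre_subst (S : eqType) (x y : seq (option S)) : rkw x = 1 -> rkw y = 1 ->
  pre (subst1 x y) = pre x + pre y.
Proof.
move=> /rk1_dec [l [r [-> [H1 H2]]]] Hy; rewrite subst1_dec // pre_cat0 // pre_dec // pre_cat1 //.
Qed.

Lemma post_subst (S : eqType) (x y : seq (option S)) : rkw x = 1 -> rkw y = 1 ->
  post (subst1 x y) = post y + post x.
Proof.
move=> /rk1_dec [l [r [-> [H1 H2]]]] Hy; rewrite subst1_dec // post_cat1 //; last by rewrite rkw_cat Hy H2.
by rewrite post_cat0 // post_dec.
Qed.

Lemma size_subst (S : eqType) (x y : seq (option S)) : rkw x = 1 ->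
  size (subst1 x y) = pre x + size y + post x.
Proof.
move=> /rk1_dec [l [r [-> [H1 H2]]]]; rewrite subst1_dec // pre_dec // post_dec // !size_cat; lia.
Qed.


Definition wf (s : span) := let '(a,b,c,d) := s in a <= b /\ b <= c /\ c <= d.
Definition nested (s s' : span) := let '(a,b,c,d) := s in let '(a',b',c',d') := s' in
  a <= a' /\ b' <= b /\ c <= c' /\ d' <= d.
Definition inL (s s' : span) := let '(a,b,c,d) := s in let '(a',b',c',d') := s' in
  a <= a' /\ d' <= b.
Definition inR (s s' : span) := let '(a,b,c,d) := s in let '(a',b',c',d') := s' in
  c <= a' /\ d' <= d.
Definition inX (s s' : span) := let '(a,b,c,d) := s in let '(a',b',c',d') := s' in
  a <= a' /\ d' <= d.
Definition gap (s s' : span) := let '(a,b,c,d) := s in let '(a',b',c',d') := s' in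
  b <= a' /\ d' <= c.
Definition before (s s' : span) := let '(a,b,c,d) := s in let '(a',b',c',d') := s' in
  d <= a'.
Definition flat (s : span) := let '(a,b,c,d) := s in b = c /\ c = d.

Definition InvA (Sigma:finType) (G : grammar Sigma) (t : tree Sigma (nt G)) (s : span) :=
  let '(a,b,c,d) := s in a <= b /\ b <= c /\ c <= d /\
   ((rkN (label t) = 1 /\ pre (yield t) = b - a /\ post (yield t) = d - c) \/
    (rkN (label t) = 0 /\ b = c /\ c = d /\ size (yield t) = b - a)).
Definition Inv (Sigma:finType) (G : grammar Sigma) (t : tree Sigma (nt G)) (s : span) :=
  valid_tree t /\ InvA t s.

Definition crel (ra rx : nat) (s sx : span) :=
  inX s sx /\ (ra = 1 -> rx = 1 -> nested s sx) /\ (ra = 1 -> rx = 0 -> inL s sx \/ inR s sx).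

Lemma child (Sigma : finType) (G : grammar Sigma) A r (tl tr : tree Sigma (nt G)) s s1 s2 :
  cnf G -> Inv (Node A r tl tr) s -> child_spans r tl tr s = (s1, s2) ->
  Inv tl s1 /\ Inv tr s2 /\
  crel (rkN A) (rkN (label tl)) s s1 /\ crel (rkN A) (rkN (label tr)) s s2 /\
  (before s1 s2 \/ gap s1 s2) /\
  (rkN (label tl) = 1 -> rkN (label tr) = 1 -> gap s1 s2).
Ltac atoms := repeat match goal with
  | H : context [size (yield ?t)] |- _ => let z := fresh "z" in set z := size (yield t) in H *
  | H : context [pre (yield ?t)] |- _ => let z := fresh "p" in set z := pre (yield t) in H *
  | H : context [post (yield ?t)] |- _ => let z := fresh "q" in set z := post (yield t) in H *
  | |- context [size (yield ?t)] => let z := fresh "z" in set z := size (yield t)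
  | |- context [pre (yield ?t)] => let z := fresh "p" in set z := pre (yield t)
  | |- context [post (yield ?t)] => let z := fresh "q" in set z := post (yield t)
  end.

Proof.
move=> HG [[Hp [vl [vr Hr]]] Hs] Hcs.
suff: InvA tl s1 /\ InvA tr s2 /\ crel (rkN A) (rkN (label tl)) s s1 /\ crel (rkN A) (rkN (label tr)) s s2 /\ (before s1 s2 \/ gap s1 s2) /\ (rkN (label tl) = 1 -> rkN (label tr) = 1 -> gap s1 s2) by rewrite /Inv; tauto.
have [Hb [_ H3]] := HG.
have Bl := Hb (label tl); have Br := Hb (label tr); have BA := Hb A.
have yl := rk_yield HG vl; have yr := rk_yield HG vr.
have := H3 _ Hp; case: s Hs Hcs => [[[a1 b1] a2] b2] Hs Hcs.
case: r Hp Hr Hs Hcs => //= A' B C _ [-> [-> ->]] Hs Hcs.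
{ move=> [Hrk _].
  have [hB|hB] : rkN (label tl) = 0 \/ rkN (label tl) = 1 by lia.
  all: have [hC|hC] : rkN (label tr) = 0 \/ rkN (label tr) = 1 by lia.
  all: move: Hcs; rewrite /child_spans hB ?hC /= => -[<- <-].
  all: rewrite ?hB ?hC in yl yr; rewrite ?size_cat in Hs.
  all: try rewrite (pre_cat1 _ yl) in Hs; try rewrite (pre_cat0 _ yl) in Hs.
  all: try rewrite (post_cat0 yl yr) in Hs; try rewrite (post_cat1 yl yr) in Hs.
  all: try have := size_pp yl; try have := size_pp yr.
  all: rewrite /InvA /crel /inX /nested /inL /inR /gap /before ?hB ?hC /=; atoms; lia. }
{ move=> [hB [Hrk _]].
  have [hC|hC] : rkN (label tr) = 0 \/ rkN (label tr) = 1 by lia.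
  all: move: Hcs; rewrite /child_spans hB ?hC /= => -[<- <-].
  all: rewrite ?hB ?hC in yl yr.
  all: try rewrite (pre_subst yl yr) in Hs; try rewrite (post_subst yl yr) in Hs.
  all: try rewrite (size_subst _ yl) in Hs.
  all: try have := size_pp yl; try have := size_pp yr.
  all: rewrite /InvA /crel /inX /nested /inL /inR /gap /before ?hB ?hC /=; atoms; lia. }
Qed.


Definition drel (ra : nat) (s s' : span) :=
  inX s s' /\ (ra = 1 -> inL s s' \/ inR s s' \/ nested s s').
Definition out4 (sp sq : span) := before sp sq \/ before sq sp \/ gap sp sq \/ gap sq sp.

Ltac spans := repeat match goal with
  | s : span |- _ => let a := fresh "a" in let b := fresh "b" in let c := fresh "c" in
      let d := fresh "d" in destruct s as [[[a b] c] d] end.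
Ltac gen := repeat match goal with
  | |- context [@span_at _ _ ?t ?s ?p] =>
      let x := fresh "sx" in
      repeat match goal with H : context [@span_at _ _ t s p] |- _ => revert H end;
      generalize (span_at t s p); intro x; intros
  | H : context [@span_at _ _ ?t ?s ?p] |- _ => revert H
  end.
Ltac arith := gen; spans; unfold drel, crel, out4, wf, flat, inX, inL, inR, nested, gap, before in *; simpl in *; lia.

Lemma subtree_nil (Sigma N : Type) (t : tree Sigma N) : subtree t [::] = Some t.
Proof. by case: t. Qed.
Lemma span_at_nil (Sigma : finType) (G : grammar Sigma) (t : tree Sigma (nt G)) s : span_at t s [::] = s.
Proof. by case: t. Qed.

Lemma rel_comp ra rx (s sx s' : span) : crel ra rx s sx -> (rx = 0 \/ rx = 1) -> drel rx sx s' -> drel ra s s'.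
Proof. arith. Qed.

Lemma Inv_info (Sigma : finType) (G : grammar Sigma) (t : tree Sigma (nt G)) s :
  Inv t s -> wf s /\ (rkN (label t) = 1 \/ (rkN (label t) = 0 /\ flat s)).
Proof. case: s => [[[a b] c] d] [_]; rewrite /InvA /wf /flat; lia. Qed.

Lemma D1 (Sigma : finType) (G : grammar Sigma) (t t' : tree Sigma (nt G)) s p :
  cnf G -> Inv t s -> subtree t p = Some t' ->
  Inv t' (span_at t s p) /\ drel (rkN (label t)) s (span_at t s p).
Proof.
move=> HG; elim: p t s => [|b p IH] t s Hi /=.
  rewrite subtree_nil span_at_nil; move=> [<-]; split=> //; case: s Hi => [[[a b] c] d] _; arith.
case: t Hi => // A r tl tr Hi.
case E: (child_spans r tl tr s) => [s1 s2] /=.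
have [I1 [I2 [C1 [C2 _]]]] := child HG Hi E.
have [Hb _] := HG.
case: b => Hs; rewrite E /=.
  have [Ht Hr] := IH _ _ I2 Hs; split=> //; apply: rel_comp C2 _ Hr.
  by have := Hb (label tr); lia.
have [Ht Hr] := IH _ _ I1 Hs; split=> //; apply: rel_comp C1 _ Hr.
by have := Hb (label tl); lia.
Qed.

Lemma D2 (Sigma : finType) (G : grammar Sigma) (t : tree Sigma (nt G)) s p :
  cnf G -> Inv t s ->
  (forall k, k <= size p -> exists t'', subtree t (take k p) = Some t'' /\ rkN (label t'') = 1) ->
  nested s (span_at t s p).
Proof.
move=> HG; elim: p t s => [|b p IH] t s Hi /=.
  rewrite span_at_nil; move=> _; case: s Hi => [[[a b] c] d] _; arith.
move=> Hk.
have [X [HX rX]] := Hk 1 erefl.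
have [t0 [H0 r0]] := Hk 0 erefl.
move: H0; rewrite /= subtree_nil => -[E0]; subst t0.
case: t Hi HX r0 Hk => // A r tl tr Hi HX r0 Hk.
case E: (child_spans r tl tr s) => [s1 s2] /=.
have [I1 [I2 [C1 [C2 _]]]] := child HG Hi E.
have Hk' : forall k, k <= size p -> exists t'',
   subtree (if b then tr else tl) (take k p) = Some t'' /\ rkN (label t'') = 1.
  by move=> k Hk0; have := Hk k.+1; rewrite /= ltnS => /(_ Hk0).
rewrite E; clear Hk; case: b HX Hk' => /= HX Hk'; rewrite take0 subtree_nil in HX; case: HX rX => <- rX.
  have := IH _ _ I2 Hk'; move: C2; rewrite /= in r0; rewrite r0 rX; arith.
have := IH _ _ I1 Hk'; move: C1; rewrite /= in r0; rewrite r0 rX; arith.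
Qed.

Lemma subtree_cat (Sigma N : Type) (t : tree Sigma N) p q :
  subtree t (p ++ q) = if subtree t p is Some t1 then subtree t1 q else None.
Proof.
elim: p t => [|b p IH] t; first by rewrite subtree_nil.
by case: t => //= A r tl tr; rewrite IH.
Qed.

Lemma span_at_cat (Sigma : finType) (G : grammar Sigma) (t t1 : tree Sigma (nt G)) s p q :
  subtree t p = Some t1 -> span_at t s (p ++ q) = span_at t1 (span_at t s p) q.
Proof.
elim: p t s => [|b p IH] t s; first by rewrite subtree_nil span_at_nil => -[->].
by case: t => //= A r tl tr; case: b => /= H; rewrite (IH _ _ H).
Qed.

Lemma shift1 (Sigma : finType) (G : grammar Sigma) A r (tl tr : tree Sigma (nt G)) b p :
  (forall k, k <= size (b :: p) -> exists t'', subtree (Node A r tl tr) (take k (b :: p)) = Some t''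
     /\ rkN (label t'') = 1) ->
  forall k, k <= size p -> exists t'', subtree (if b then tr else tl) (take k p) = Some t''
     /\ rkN (label t'') = 1.
Proof. by move=> Hk k Hk0; have := Hk k.+1; rewrite /= ltnS => /(_ Hk0). Qed.

Lemma Iloc (Sigma : finType) (G : grammar Sigma) (t tp tq : tree Sigma (nt G)) s b p1 q1 :
  cnf G -> Inv t s -> subtree t (b :: p1) = Some tp -> subtree t (~~ b :: q1) = Some tq ->
  out4 (span_at t s (b :: p1)) (span_at t s (~~ b :: q1)).
Proof.
move=> HG; case: t => // A r tl tr Hi /=.
case E: (child_spans r tl tr s) => [s1 s2].
have [I1 [I2 [C1 [C2 [Hbg _]]]]] := child HG Hi E.
have [w1 f1] := Inv_info I1; have [w2 f2] := Inv_info I2.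
case: b => /= Hp Hq.
  have [Ip Rp] := D1 HG I2 Hp; have [Iq Rq] := D1 HG I1 Hq.
  have [wp _] := Inv_info Ip; have [wq _] := Inv_info Iq.
  clear -w1 w2 f1 f2 Rp Rq wp wq Hbg; arith.
have [Ip Rp] := D1 HG I1 Hp; have [Iq Rq] := D1 HG I2 Hq.
have [wp _] := Inv_info Ip; have [wq _] := Inv_info Iq.
clear -w1 w2 f1 f2 Rp Rq wp wq Hbg; arith.
Qed.

Lemma I2loc (Sigma : finType) (G : grammar Sigma) (t : tree Sigma (nt G)) s b p1 q1 :
  cnf G -> Inv t s ->
  (forall k, k <= size (b :: p1) -> exists t'', subtree t (take k (b :: p1)) = Some t''
     /\ rkN (label t'') = 1) ->
  (forall k, k <= size (~~ b :: q1) -> exists t'', subtree t (take k (~~ b :: q1)) = Some t''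
     /\ rkN (label t'') = 1) ->
  gap (span_at t s (b :: p1)) (span_at t s (~~ b :: q1)) \/
  gap (span_at t s (~~ b :: q1)) (span_at t s (b :: p1)).
Proof.
move=> HG Hi HP HQ.
have [X [HX rX]] := HP 1 erefl.
have [Y [HY rY]] := HQ 1 erefl.
case: t Hi HP HQ HX HY => // A r tl tr Hi HP HQ HX HY /=.
have HP' := shift1 HP; have HQ' := shift1 HQ; clear HP HQ.
case E: (child_spans r tl tr s) => [s1 s2] /=.
have [I1 [I2 [C1 [C2 [_ Hg]]]]] := child HG Hi E.
move: HX HY; rewrite /= !take0 !subtree_nil.
case: b HP' HQ' => /= HP' HQ' [EX] [EY]; subst X Y.
  have N1 := D2 HG I2 HP'; have N2 := D2 HG I1 HQ'.
  have := Hg rY rX; clear -N1 N2; arith.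
have N1 := D2 HG I1 HP'; have N2 := D2 HG I2 HQ'.
have := Hg rX rY; clear -N1 N2; arith.
Qed.


Lemma catIs' (T : Type) (p q r : seq T) : p ++ q = p ++ r -> q = r.
Proof. by elim: p => //= a p IH [] /IH. Qed.

Lemma prefix_cases (p q : seq bool) :
  (exists r, q = p ++ r) \/ (exists r, p = q ++ r) \/
  (exists z b p1 q1, p = z ++ b :: p1 /\ q = z ++ ~~ b :: q1).
Proof.
elim: p q => [|a p IH] q; first by left; exists q.
case: q => [|c q]; first by right; left; exists (a :: p).
case: (eqVneq a c) => [<-|Hac].
  have [[r ->]|[[r ->]|[z [b [p1 [q1 [-> ->]]]]]]] := IH q.
  - by left; exists r.
  - by right; left; exists r.
  - by right; right; exists (a :: z), b, p1, q1.
right; right; exists [::], a, p, q; split=> //.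
by case: a c Hac => [] [].
Qed.

Definition PathR (Sigma : finType) (G : grammar Sigma) (T : tree Sigma (nt G)) p r :=
  forall k, k <= size r -> exists t, subtree T (p ++ take k r) = Some t /\ rkN (label t) = 1.

Lemma PathR_l (Sigma : finType) (G : grammar Sigma) (T : tree Sigma (nt G)) p r1 r2 :
  PathR T p (r1 ++ r2) -> PathR T p r1.
Proof.
move=> H k Hk; have := H k; rewrite size_cat takel_cat //; apply; lia.
Qed.

Lemma PathR_r (Sigma : finType) (G : grammar Sigma) (T : tree Sigma (nt G)) p r1 r2 :
  PathR T p (r1 ++ r2) -> PathR T (p ++ r1) r2.
Proof.
move=> H k Hk; have := H (size r1 + k); rewrite size_cat take_cat.
have -> : (size r1 + k < size r1) = false by lia.
rewrite addKn catA; apply; lia.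
Qed.

Lemma PathR_node (Sigma : finType) (G : grammar Sigma) (T : tree Sigma (nt G)) p r :
  PathR T p r -> exists t, subtree T p = Some t /\ rkN (label t) = 1.
Proof. by move=> /(_ 0 erefl); rewrite take0 cats0. Qed.

Lemma PathR_end (Sigma : finType) (G : grammar Sigma) (T : tree Sigma (nt G)) p r :
  PathR T p r -> exists t, subtree T (p ++ r) = Some t /\ rkN (label t) = 1.
Proof. by move=> /(_ (size r) (leqnn _)); rewrite take_size. Qed.


Lemma GInv (Sigma : finType) (G : grammar Sigma) (T t : tree Sigma (nt G)) s0 p :
  cnf G -> Inv T s0 -> subtree T p = Some t -> Inv t (span_at T s0 p).
Proof. by move=> HG Hi Hp; have [] := D1 HG Hi Hp. Qed.

Lemma GD1 (Sigma : finType) (G : grammar Sigma) (T t t' : tree Sigma (nt G)) s0 p r :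
  cnf G -> Inv T s0 -> subtree T p = Some t -> subtree T (p ++ r) = Some t' ->
  drel (rkN (label t)) (span_at T s0 p) (span_at T s0 (p ++ r)).
Proof.
move=> HG Hi Hp; rewrite subtree_cat Hp (span_at_cat _ _ Hp) => Hr.
by have [] := D1 HG (GInv HG Hi Hp) Hr.
Qed.

Lemma GD2 (Sigma : finType) (G : grammar Sigma) (T : tree Sigma (nt G)) s0 p r :
  cnf G -> Inv T s0 -> PathR T p r -> nested (span_at T s0 p) (span_at T s0 (p ++ r)).
Proof.
move=> HG Hi HP; have [t [Hp _]] := PathR_node HP.
rewrite (span_at_cat _ _ Hp); apply: D2 HG (GInv HG Hi Hp) _.
by move=> k Hk; have := HP k Hk; rewrite subtree_cat Hp.
Qed.

Lemma GI (Sigma : finType) (G : grammar Sigma) (T tp tq : tree Sigma (nt G)) s0 z b p1 q1 :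
  cnf G -> Inv T s0 -> subtree T (z ++ b :: p1) = Some tp -> subtree T (z ++ ~~ b :: q1) = Some tq ->
  out4 (span_at T s0 (z ++ b :: p1)) (span_at T s0 (z ++ ~~ b :: q1)).
Proof.
move=> HG Hi; rewrite !subtree_cat; case Hz: (subtree T z) => [tz|] // Hp Hq.
rewrite !(span_at_cat _ _ Hz); exact: Iloc HG (GInv HG Hi Hz) Hp Hq.
Qed.

Lemma GI2 (Sigma : finType) (G : grammar Sigma) (T : tree Sigma (nt G)) s0 z b p1 q1 :
  cnf G -> Inv T s0 -> PathR T z (b :: p1) -> PathR T z (~~ b :: q1) ->
  gap (span_at T s0 (z ++ b :: p1)) (span_at T s0 (z ++ ~~ b :: q1)) \/
  gap (span_at T s0 (z ++ ~~ b :: q1)) (span_at T s0 (z ++ b :: p1)).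
Proof.
move=> HG Hi HP HQ; have [tz [Hz _]] := PathR_node HP.
rewrite !(span_at_cat _ _ Hz); apply: I2loc HG (GInv HG Hi Hz) _ _.
  by move=> k Hk; have := HP k Hk; rewrite subtree_cat Hz.
by move=> k Hk; have := HQ k Hk; rewrite subtree_cat Hz.
Qed.

Lemma Gwf (Sigma : finType) (G : grammar Sigma) (T t : tree Sigma (nt G)) s0 p :
  cnf G -> Inv T s0 -> subtree T p = Some t -> wf (span_at T s0 p).
Proof. by move=> HG Hi Hp; have [] := Inv_info (GInv HG Hi Hp). Qed.



Ltac prep := unfold cases12, drel, crel, out4, wf, flat, inX, inL, inR, nested, gap, before in *; simpl in *;
  repeat match goal with
  | H : ?a = ?a -> _ |- _ => specialize (H eq_refl)
  | H : _ /\ _ |- _ => destruct H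
  | H : _ \/ _ |- _ => destruct H end.
Ltac try_each := first [ left; lia | right; try_each | lia ].
Ltac fin := prep; first [ left; try_each | right; try_each ].

Lemma Key (Sigma : finType) (G : grammar Sigma) (T : tree Sigma (nt G)) s0 v q u q' r
  (i1 j1 k1 l1 i2 j2 k2 l2 i1' j1' k1' l1' i2' j2' k2' l2' : nat) :
  cnf G -> Inv T s0 -> PathR T v q -> PathR T u q' -> u = v ++ r ->
  span_at T s0 v = (i1, l1, i2, l2) -> span_at T s0 (v ++ q) = (j1, k1, j2, k2) ->
  span_at T s0 u = (i1', l1', i2', l2') -> span_at T s0 (u ++ q') = (j1', k1', j2', k2') ->
  cases12 i1 j1 k1 l1 i2 j2 k2 l2 i1' j1' k1' l1' i2' j2' k2' l2' \/
  cases12 i1' j1' k1' l1' i2' j2' k2' l2' i1 j1 k1 l1 i2 j2 k2 l2.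
Proof.
move=> HG Hi HPv HPu Eu Sv Sv' Su Su'.
have Nv := GD2 HG Hi HPv; rewrite Sv Sv' in Nv.
have Nu := GD2 HG Hi HPu; rewrite Su Su' in Nu.
have [tv [Htv rv]] := PathR_node HPv; have [tv' [Htv' rv']] := PathR_end HPv.
have [tu [Htu ru]] := PathR_node HPu; have [tu' [Htu' ru']] := PathR_end HPu.
have Wv := Gwf HG Hi Htv; have Wv' := Gwf HG Hi Htv'.
have Wu := Gwf HG Hi Htu; have Wu' := Gwf HG Hi Htu'.
rewrite ?Sv ?Sv' ?Su ?Su' in Wv Wv' Wu Wu'.
have [[r2 E2]|[[r2 E2]|[z [b [p1 [q1 [E3 E4]]]]]]] := prefix_cases (v ++ q) u.
-
  have Htu2 : subtree T ((v ++ q) ++ r2) = Some tu by rewrite -E2.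
  have R := GD1 HG Hi Htv' Htu2.
  rewrite rv' -E2 Sv' Su in R.
  clear -Nv Nu Wv Wv' Wu Wu' R; fin.
-
  have Eq : q = r ++ r2 by apply: (@catIs' _ v); rewrite E2 Eu catA.
  have HPv2 : PathR T v (r ++ r2) by rewrite -Eq.
  have Nvu := GD2 HG Hi (PathR_l HPv2).
  rewrite -Eu Sv Su in Nvu.
  have HPu2 : PathR T u r2 by rewrite Eu; apply: PathR_r.
  have Nuv' := GD2 HG Hi HPu2; rewrite -E2 Su Sv' in Nuv'.
  have [[r4 E4]|[[r4 E4]|[z [b [p1 [q1 [E5 E6]]]]]]] := prefix_cases q' r2.
  + have HP4 : PathR T (u ++ q') r4 by apply: PathR_r; rewrite -E4.
    have N4 := GD2 HG Hi HP4; rewrite -catA -E4 -E2 Su' Sv' in N4.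
    clear -Nv Nu Wv Wv' Wu Wu' Nvu Nuv' N4; fin.
  + have HP4 : PathR T (u ++ r2) r4 by apply: PathR_r; rewrite -E4.
    have N4 := GD2 HG Hi HP4; rewrite -catA -E4 -E2 Su' Sv' in N4.
    clear -Nv Nu Wv Wv' Wu Wu' Nvu Nuv' N4; fin.
  + have HP5 : PathR T (u ++ z) (b :: p1) by apply: PathR_r; rewrite -E5.
    have HP6 : PathR T (u ++ z) (~~ b :: q1) by apply: PathR_r; rewrite -E6.
    have Gp := GI2 HG Hi HP5 HP6.
    rewrite -!catA -E5 -E6 -E2 Su' Sv' in Gp.
    clear -Nv Nu Wv Wv' Wu Wu' Nvu Nuv' Gp; fin.
-
  have Htv'2 : subtree T (z ++ b :: p1) = Some tv' by rewrite -E3.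
  have Htu3 : subtree T (z ++ ~~ b :: q1) = Some tu by rewrite -E4.
  have O := GI HG Hi Htv'2 Htu3; rewrite -E3 -E4 Sv' Su in O.
  have Htu4 : subtree T (v ++ r) = Some tu by rewrite -Eu.
  have R := GD1 HG Hi Htv Htu4; rewrite rv -Eu Sv Su in R.
  clear -Nv Nu Wv Wv' Wu Wu' O R; fin.
Qed.



Lemma pump_path (Sigma : finType) (G : grammar Sigma) (T : tree Sigma (nt G)) v v' :
  pump2 T v v' -> exists q, v' = v ++ q /\ PathR T v q.
Proof.
move=> [tv [tv' [Hv [_ [_ [_ [_ [Hr [q [tv0 [_ [-> [Hv0 Hk]]]]]]]]]]]]].
exists q; split=> // k Hk0; have [t [Ht rt]] := Hk k Hk0.
by exists t; split=> //; rewrite rt; move: Hv0; rewrite Hv => -[<-].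
Qed.

Theorem lemma9 (Sigma : finType) (G : grammar Sigma) (w : seq Sigma)
  (T : tree Sigma (nt G)) (v v' u u' : seq bool)
  (i1 j1 k1 l1 i2 j2 k2 l2 i1' j1' k1' l1' i2' j2' k2' l2' : nat) :
  cnf G -> derivation T w ->
  pump2 T v v' -> pump2 T u u' ->
  constituent T v = (i1, l1, i2, l2) -> constituent T v' = (j1, k1, j2, k2) ->
  constituent T u = (i1', l1', i2', l2') -> constituent T u' = (j1', k1', j2', k2') ->
  cases12 i1 j1 k1 l1 i2 j2 k2 l2 i1' j1' k1' l1' i2' j2' k2' l2' \/
  cases12 i1' j1' k1' l1' i2' j2' k2' l2' i1 j1 k1 l1 i2 j2 k2 l2.
Proof.
move=> HG [Hval [Hlab Hy]] /pump_path [q [-> HPv]] /pump_path [q' [-> HPu]].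
rewrite /constituent.
set s0 := (0, _, _, _) => Sv Sv' Su Su'.
have Hi : Inv T s0.
  split=> //; rewrite /s0 /InvA Hlab; have [_ [-> _]] := HG; lia.
have [[r E]|[[r E]|[z [b [p1 [q1 [E3 E4]]]]]]] := prefix_cases v u.
- exact: Key HG Hi HPv HPu E Sv Sv' Su Su'.
- by apply/or_comm; apply: Key HG Hi HPu HPv E Su Su' Sv Sv'.
have [tv [Htv _]] := PathR_node HPv; have [tu [Htu _]] := PathR_node HPu.
have Wv := Gwf HG Hi Htv; have Wu := Gwf HG Hi Htu.
have Nv := GD2 HG Hi HPv; have Nu := GD2 HG Hi HPu.
have Wv' : wf (span_at T s0 (v ++ q)).
  by have [t [Ht _]] := PathR_end HPv; exact: Gwf HG Hi Ht.
have Wu' : wf (span_at T s0 (u ++ q')).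
  by have [t [Ht _]] := PathR_end HPu; exact: Gwf HG Hi Ht.
rewrite E3 in Htv; rewrite E4 in Htu.
have O := GI HG Hi Htv Htu; rewrite -E3 -E4 in O.
rewrite Sv Sv' Su Su' in Wv Wu Nv Nu Wv' Wu' O.
clear -Wv Wu Nv Nu Wv' Wu' O; prep; rewrite /cases12.
- by left; left.
- by right; left.
- by left; do 11 right; rewrite /=; lia.
- by right; do 11 right; rewrite /=; lia.
Qed.
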